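(* Let $n\ge 20$ be an integer. For all integers $p\ge 1$ and $q\ge 3$ with $p+q=n-2$, $$\lambda_{\min}\big(\mathcal U(p,q)^c\big)\ \ge\ \lambda_{\min}\Big(\mathcal U\big(\lceil (n-2)/2\rceil,\lfloor (n-2)/2\rfloor\big)^c\Big),$$ with equality if and only if $p=\lceil (n-2)/2\rceil$ and $q=\lfloor (n-2)/2\rfloor$.
   Context: All graphs are simple and finite. For a graph $G$, $\lambda_{\min}(G)$ denotes the least eigenvalue of the adjacency matrix $A(G)$, and $G^c$ denotes the complement of $G$. $K_{1,m}$ is the star with $m$ edges; its vertex of degree $m$ is the center and the others are pendant vertices. $S_m^3$ denotes the graph of order $m$ obtained from $K_{1,m-1}$ by adding one edge between two of its pendant vertices. For integers $p\ge 1$, $q\ge 3$, $\mathcal U(p,q)$ is the graph of order $p+q+2$ obtained from disjoint copies of $K_{1,p}$ and $S_{q+1}^3$ by adding one edge joining a pendant vertex of $K_{1,p}$ to a pendant (degree-one) vertex of $S_{q+1}^3$. *)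

(* Defs.v *)
From HB Require Import structures.
From mathcomp Require Import all_boot all_order all_algebra.
Set Implicit Arguments. Unset Strict Implicit. Unset Printing Implicit Defensive.
Import Order.TTheory GRing.Theory Num.Theory.
Local Open Scope ring_scope.

(* A simple graph on 'I_n is given by a symmetric irreflexive relation. *)
Definition adjmx (R : nzRingType) (n : nat) (e : rel 'I_n) : 'M[R]_n :=
  \matrix_(i, j) (e i j)%:R.

Definition compl_rel (n : nat) (e : rel 'I_n) : rel 'I_n :=
  fun i j => (i != j) && ~~ e i j.

(* U(p,q) on vertices 0 .. p+q+1:
   K_{1,p}: center 0, pendants 1..p;
   S^3_{q+1}: center p+1, pendants p+2..p+q+1, extra edge {p+2,p+3};
   joining edge {1, p+q+1} (vertex p+q+1 has degree one in S^3_{q+1} as q >= 3). *)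
Definition U_edge (p q : nat) (i j : nat) : bool :=
  [|| (i == 0%N) && (1 <= j <= p)%N,
      (i == p.+1) && (p.+2 <= j <= p + q + 1)%N,
      (i == p.+2) && (j == p.+3) |
      (i == 1%N) && (j == p + q + 1)%N].

Definition U_rel (p q : nat) : rel 'I_(p + q + 2) :=
  fun i j => U_edge p q i j || U_edge p q j i.

Definition Ucompl_mx (R : nzRingType) (p q : nat) : 'M[R]_(p + q + 2) :=
  adjmx R (compl_rel (@U_rel p q)).

Definition is_lambda_min (R : realFieldType) (n : nat) (A : 'M[R]_n) (l : R) : Prop :=
  eigenvalue A l /\ (forall m : R, eigenvalue A m -> l <= m).

(* Main.v *)
Require Import Defs.
From HB Require Import structures.
From mathcomp Require Import all_boot all_order all_algebra.
From mathcomp Require Import zify ring lra.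
Import Order.TTheory GRing.Theory Num.Theory.
Local Open Scope ring_scope.

Section Alg.
Variable R : rcfType.
Implicit Types t : R.

Definition gf (P Q t : R) : R :=
  - t^+7 + t^+6 - t^+5 + 5 * t^+4 + 4 * t^+3 - 6 * t^+2 - t - 9
  + (t + 1) * ((t^+5 - t^+4 - 2 * t^+3 + 5 * t^+2 - 11 * t + 9) * P
              + (t^+5 - t^+4 - 2 * t^+3 + t^+2 - t + 3) * Q)
  + (t + 1)^+2 * (-2 * t^+2 + 5 * t - 3) * P * Q.

Lemma gcmp (P Q P0 Q0 t : R) : t < -3 -> P + Q = P0 + Q0 -> (Q0 = P0 \/ Q0 = P0 - 1) ->
  (P0 + 1 <= P \/ P <= P0 - 1) -> gf P0 Q0 t < gf P Q t.
Proof.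
move=> ht hs hpar hd.
have hQ : Q = P0 + Q0 - P by lra.
have Kpos : 0 < (- (t + 1)) * (2 * t^+2 - 5 * t + 3) by nra.
have key : gf P Q t - gf P0 Q0 t = (- (t + 1)) * (2 * t^+2 - 5 * t + 3) *
   ((P - P0) * ((t + 1) * (Q0 - P0 - (P - P0)) - 2)).
  by rewrite hQ /gf; ring.
suff : 0 < (P - P0) * ((t + 1) * (Q0 - P0 - (P - P0)) - 2).
  by move=> h; have := mulr_gt0 Kpos h; lra.
set d := P - P0.
have hu : 2 < - (t + 1) by lra.
case: hpar => -> ; case: hd => hd.
- have h1 : 1 <= d by rewrite /d; lra.
  have h2 : 0 <= (- (t + 1) - 2) * (d - 1) by apply: mulr_ge0; lra.
  apply: mulr_gt0; nra.
- have h1 : d <= -1 by rewrite /d; lra.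
  have h2 : 0 <= (- (t + 1)) * (- d) by apply: mulr_ge0; lra.
  rewrite -mulrNN; apply: mulr_gt0; nra.
- have h1 : 1 <= d by rewrite /d; lra.
  have h2 : 0 <= (- (t + 1) - 2) * (d - 1) by apply: mulr_ge0; lra.
  apply: mulr_gt0; nra.
- have h1 : d <= -1 by rewrite /d; lra.
  have h2 : 0 <= (- (t + 1)) * (- d - 1) by apply: mulr_ge0; lra.
  rewrite -mulrNN; apply: mulr_gt0; nra.
Qed.

Lemma gm3 (P Q : R) : 9 <= P -> 9 <= Q -> gf P Q (-3) < 0.
Proof.
move=> hP hQ.
have -> : gf P Q (-3) = 3396 + 366 * P + 510 * Q - 144 * (P * Q) by rewrite /gf; ring.
have h : 0 <= (P - 9) * (Q - 9) by apply: mulr_ge0; lra.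
nra.
Qed.

Lemma gbig (P Q s : R) : 20 <= s -> 0 <= P -> 0 <= Q -> P + Q = s - 2 -> 0 < gf P Q (- s).
Proof.
move=> hs hP hQ hPQs.
have -> : gf P Q (- s) =
   (s^+7 + s^+6 + s^+5 + 5 * s^+4 - 4 * s^+3 - 6 * s^+2 + s - 9)
   + (s - 1) * ((s^+5 + s^+4 - 2 * s^+3 - 5 * s^+2 - 11 * s - 9) * P
               + (s^+5 + s^+4 - 2 * s^+3 - s^+2 - s - 3) * Q)
   - (s - 1)^+2 * (2 * s^+2 + 5 * s + 3) * (P * Q) by rewrite /gf; ring.
have s0 : 0 <= s by lra.
have s2 : 400 <= s^+2 by nra.
have s3 : 20 * s^+2 <= s^+3 by rewrite exprS; nra.
have s4 : 20 * s^+3 <= s^+4 by rewrite (exprS _ 3); nra.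
have s5 : 20 * s^+4 <= s^+5 by rewrite (exprS _ 4); nra.
have s6 : 20 * s^+5 <= s^+6 by rewrite (exprS _ 5); nra.
have s7 : 20 * s^+6 <= s^+7 by rewrite (exprS _ 6); nra.
have c1 : 0 <= s^+5 + s^+4 - 2 * s^+3 - 5 * s^+2 - 11 * s - 9 by nra.
have c2 : 0 <= s^+5 + s^+4 - 2 * s^+3 - s^+2 - s - 3 by nra.
have t2 : 0 <= (s - 1) * ((s^+5 + s^+4 - 2 * s^+3 - 5 * s^+2 - 11 * s - 9) * P
               + (s^+5 + s^+4 - 2 * s^+3 - s^+2 - s - 3) * Q).
  by apply: mulr_ge0; [lra | apply: addr_ge0; apply: mulr_ge0].
have hpq : P * Q <= s^+2 by nra.
have hpq0 : 0 <= P * Q by apply: mulr_ge0.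
have e1 : (s - 1)^+2 * (2 * s^+2 + 5 * s + 3) <= 3 * s^+4 by nra.
have e0 : 0 <= (s - 1)^+2 * (2 * s^+2 + 5 * s + 3) by apply: mulr_ge0; nra.
have t3 : (s - 1)^+2 * (2 * s^+2 + 5 * s + 3) * (P * Q) <= 3 * s^+4 * s^+2.
  by apply: ler_pM.
have : s^+4 * s^+2 = s^+6 by rewrite -exprD.
nra.
Qed.

Definition aE (t S y : R) := S - t * y.
Definition bE (t P S y : R) := S - t * aE t S y - (P - 1) * y.
Definition fE (t P S y : R) := S - t * bE t P S y - aE t S y.
Definition cE (t P S y : R) := S - t * fE t P S y - bE t P S y.
Definition K1f (t P Q S y : R) :=
  t * (t + 1) * (t * cE t P S y + fE t P S y - S) + 2 * t * (S - cE t P S y)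
  + (t + 1) * (Q - 3) * (S - cE t P S y).
Definition K2f (t P Q S y : R) :=
  t * (t + 1) * (aE t S y + bE t P S y + (P - 1) * y + cE t P S y + fE t P S y - S)
  + 2 * t * (S - cE t P S y) + (t + 1) * (Q - 3) * (S - cE t P S y).

Lemma K1lin (t P Q S y : R) : K1f t P Q S y = K1f t P Q 1 0 * S + K1f t P Q 0 1 * y.
Proof. rewrite /K1f /cE /fE /bE /aE; ring. Qed.
Lemma K2lin (t P Q S y : R) : K2f t P Q S y = K2f t P Q 1 0 * S + K2f t P Q 0 1 * y.
Proof. rewrite /K2f /cE /fE /bE /aE; ring. Qed.
Lemma Kdet (t P Q : R) : K1f t P Q 1 0 * K2f t P Q 0 1 - K1f t P Q 0 1 * K2f t P Q 1 0
   = - (t * (t + 1)) * gf P Q t.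
Proof. rewrite /K1f /K2f /cE /fE /bE /aE /gf; ring. Qed.

Lemma ker2 (a b c d : R) : a * d - b * c = 0 ->
  exists x y : R, (x != 0 \/ y != 0) /\ a * x + b * y = 0 /\ c * x + d * y = 0.
Proof.
move=> hdet.
have [ha|ha] := eqVneq a 0; have [hb|hb] := eqVneq b 0.
- subst a b.
  have [hc|hc] := eqVneq c 0; have [hd|hd] := eqVneq d 0.
  + subst; exists 1, 0; split; [left; exact: oner_neq0 | split; ring].
  + exists d, (- c); split; [left => // | split; rewrite ?hdet; ring].
  + exists d, (- c); split; [right; rewrite oppr_eq0 // | split; ring].
  + exists d, (- c); split; [left => // | split; ring].
- exists b, (- a); split; [by left | split; [ring | rewrite -[RHS]oppr0 -hdet; ring]].
- exists b, (- a); split; [by right; rewrite oppr_eq0 | split; [ring | rewrite -[RHS]oppr0 -hdet; ring]].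
- exists b, (- a); split; [by left | split; [ring | rewrite -[RHS]oppr0 -hdet; ring]].
Qed.

Lemma alg_dir1 (t P Q S y a b c d e f z : R) : t < -3 -> 1 <= P ->
  t * y = S - a ->
  t * a = S - (b + (P - 1) * y) ->
  t * b = S - (a + f) ->
  t * c = S - (d + e + (Q - 3) * z + f) ->
  t * d = S - (c + e) ->
  t * e = S - (c + d) ->
  t * z = S - c ->
  t * f = S - (c + b) ->
  S = a + b + (P - 1) * y + c + d + e + (Q - 3) * z + f ->
  gf P Q t != 0 ->
  a = 0 /\ b = 0 /\ c = 0 /\ d = 0 /\ e = 0 /\ f = 0 /\ y = 0 /\ z = 0.
Proof.
move=> ht hP ty ea eb ec ed ee tz ef eS hg.
have t0 : t != 0 by apply/negP => /eqP h; lra.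
have t1 : t + 1 != 0 by apply/negP => /eqP h; lra.
have tm1 : t - 1 != 0 by apply/negP => /eqP h; lra.
have hde : d = e.
  have h : (t - 1) * (d - e) = 0 by lra.
  by move: h => /eqP; rewrite mulf_eq0 (negbTE tm1) /= subr_eq0 => /eqP.
subst d.
have ha : a = S - t * y by lra.
have hb : b = S - t * a - (P - 1) * y by lra.
have hf : f = S - t * b - a by lra.
have hc : c = S - t * f - b by lra.
have B1 : t * c - (S - (e + e + (Q - 3) * z + f)) = 0 by lra.
have B2 : (t + 1) * e - (S - c) = 0 by lra.
have B3 : t * z - (S - c) = 0 by lra.
have K1 : K1f t P Q S y = 0.
  have -> : K1f t P Q S y = t * (t + 1) * (t * c + f - S) + 2 * t * (S - c)
     + (t + 1) * (Q - 3) * (S - c).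
    by rewrite /K1f /cE /fE /bE /aE hc hf hb ha; ring.
  have -> : t * (t + 1) * (t * c + f - S) + 2 * t * (S - c) + (t + 1) * (Q - 3) * (S - c)
    = t * (t + 1) * (t * c - (S - (e + e + (Q - 3) * z + f)))
      - 2 * t * ((t + 1) * e - (S - c)) - (t + 1) * (Q - 3) * (t * z - (S - c)) by ring.
  by rewrite B1 B2 B3; ring.
have K2 : K2f t P Q S y = 0.
  have -> : K2f t P Q S y = t * (t + 1) * (a + b + (P - 1) * y + c + f - S) + 2 * t * (S - c)
     + (t + 1) * (Q - 3) * (S - c).
    by rewrite /K2f /cE /fE /bE /aE hc hf hb ha; ring.
  have B4 : a + b + (P - 1) * y + c + e + e + (Q - 3) * z + f - S = 0 by lra.
  have -> : t * (t + 1) * (a + b + (P - 1) * y + c + f - S) + 2 * t * (S - c)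
     + (t + 1) * (Q - 3) * (S - c)
    = t * (t + 1) * (a + b + (P - 1) * y + c + e + e + (Q - 3) * z + f - S)
      - 2 * t * ((t + 1) * e - (S - c)) - (t + 1) * (Q - 3) * (t * z - (S - c)) by ring.
  by rewrite B4 B2 B3; ring.
have hdet : - (t * (t + 1)) * gf P Q t != 0.
  by rewrite mulf_neq0 // oppr_eq0 mulf_neq0.
rewrite K1lin in K1; rewrite K2lin in K2.
have hS : S = 0.
  have : (- (t * (t + 1)) * gf P Q t) * S = 0.
    rewrite -Kdet.
    have -> : (K1f t P Q 1 0 * K2f t P Q 0 1 - K1f t P Q 0 1 * K2f t P Q 1 0) * S
      = K2f t P Q 0 1 * (K1f t P Q 1 0 * S + K1f t P Q 0 1 * y)
        - K1f t P Q 0 1 * (K2f t P Q 1 0 * S + K2f t P Q 0 1 * y) by ring.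
    by rewrite K1 K2; ring.
  by move/eqP; rewrite mulf_eq0 (negbTE hdet) /= => /eqP.
have hy : y = 0.
  have : (- (t * (t + 1)) * gf P Q t) * y = 0.
    rewrite -Kdet.
    have -> : (K1f t P Q 1 0 * K2f t P Q 0 1 - K1f t P Q 0 1 * K2f t P Q 1 0) * y
      = K1f t P Q 1 0 * (K2f t P Q 1 0 * S + K2f t P Q 0 1 * y)
        - K2f t P Q 1 0 * (K1f t P Q 1 0 * S + K1f t P Q 0 1 * y) by ring.
    by rewrite K1 K2; ring.
  by move/eqP; rewrite mulf_eq0 (negbTE hdet) /= => /eqP.
have a0 : a = 0 by rewrite ha hS hy; ring.
have b0 : b = 0 by rewrite hb a0 hS hy; ring.
have f0 : f = 0 by rewrite hf b0 a0 hS; ring.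
have c0 : c = 0 by rewrite hc f0 b0 hS; ring.
have z0 : z = 0.
  by move: B3; rewrite hS c0 subrr subr0 => /eqP; rewrite mulf_eq0 (negbTE t0) => /eqP.
have e0 : e = 0.
  by move: B2; rewrite hS c0 subrr subr0 => /eqP; rewrite mulf_eq0 (negbTE t1) => /eqP.
by do !split.
Qed.

Lemma alg_dir2 (t P Q : R) : t < -3 -> 1 <= P -> gf P Q t = 0 ->
  exists S y, K1f t P Q S y = 0 /\ K2f t P Q S y = 0 /\
    (aE t S y != 0 \/ bE t P S y != 0).
Proof.
move=> ht hP hg.
have := Kdet t P Q; rewrite hg mulr0 => hdet.
have [S [y [hnz [h1 h2]]]] := ker2 _ _ _ _ hdet.
exists S, y; split; first by rewrite K1lin.
split; first by rewrite K2lin.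
case: (eqVneq (aE t S y) 0) => ha; last by left.
right; apply/negP => /eqP hb.
have hS : S = t * y by move: ha; rewrite /aE => /eqP; rewrite subr_eq0 => /eqP.
move: hb; rewrite /bE ha mulr0 subr0 hS => hb.
have hy : (t - P + 1) * y = 0 by rewrite -[RHS]hb; ring.
have : t - P + 1 != 0 by apply/negP => /eqP h; lra.
move: hy => /eqP; rewrite mulf_eq0 => /orP [/eqP h|/eqP hy0 _]; first by rewrite h eqxx.
by move: hnz; rewrite hS hy0 mulr0 eqxx; case.
Qed.
End Alg.
Arguments gf {R}.
Arguments aE {R}.
Arguments bE {R}.
Arguments fE {R}.
Arguments cE {R}.
Arguments K1f {R}.
Arguments K2f {R}.

Ltac ifs := repeat (match goal with |- context [if ?b then _ else _] =>
   case: (boolP b) => ?; try (exfalso; lia) end; rewrite /=).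

Section Comb.
Variable R : rcfType.
Variables p q : nat.
Hypothesis hp : (1 <= p)%N.
Hypothesis hq : (3 <= q)%N.
Local Notation N := (p + q + 2)%N.

Lemma ind4 (i j : nat) : nat_of_bool (U_edge p q i j) =
 (((i == 0%N) && (1 <= j <= p)) + ((i == p.+1) && (p.+2 <= j <= p+q+1))
 + ((i == p.+2) && (j == p.+3)) + ((i == 1%N) && (j == p+q+1)))%N.
Proof.
rewrite /U_edge.
have [E|h0] := eqVneq i 0%N; first by subst i; lia.
have [E|h1] := eqVneq i 1%N; first by subst i; lia.
have [E|h2] := eqVneq i p.+1; first by subst i; lia.
have [E|h3] := eqVneq i p.+2; first by subst i; lia.
lia.
Qed.

Lemma Udisj (i j : nat) : ~~ (U_edge p q i j && U_edge p q j i).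
Proof.
rewrite /U_edge.
have [E|h0] := eqVneq i 0%N; first by subst i; lia.
have [E|h1] := eqVneq i 1%N; first by subst i; lia.
have [E|h2] := eqVneq i p.+1; first by subst i; lia.
have [E|h3] := eqVneq i p.+2; first by subst i; lia.
lia.
Qed.

Lemma Uirr (i : nat) : U_edge p q i i = false.
Proof. rewrite /U_edge; lia. Qed.

Lemma orb_nat (a b : bool) : ~~ (a && b) -> nat_of_bool (a || b) = (a + b)%N.
Proof. by case: a; case: b. Qed.

Lemma ind8 (i j : nat) : nat_of_bool (U_edge p q i j || U_edge p q j i) =
 (((i == 0%N) && (1 <= j <= p)) + ((i == p.+1) && (p.+2 <= j <= p+q+1))
 + ((i == p.+2) && (j == p.+3)) + ((i == 1%N) && (j == p+q+1))
 + ((j == 0%N) && (1 <= i <= p)) + ((j == p.+1) && (p.+2 <= i <= p+q+1))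
 + ((j == p.+2) && (i == p.+3)) + ((j == 1%N) && (i == p+q+1)))%N.
Proof. by rewrite orb_nat ?Udisj // !ind4 !addnA. Qed.

Lemma compl_R (i j : nat) :
  (((i != j) && ~~ (U_edge p q i j || U_edge p q j i)) %:R : R)
  = 1 - (i == j)%:R - (U_edge p q i j || U_edge p q j i)%:R.
Proof.
have [->|hij] := eqVneq i j.
  by rewrite /= Uirr /= subr0 subrr.
by rewrite /= subr0; case: (U_edge p q i j || U_edge p q j i) => /=; rewrite ?subrr ?subr0.
Qed.

Lemma sum_eq (w : nat -> R) (c : nat) (b : bool) : (c < N)%N ->
  \sum_(0 <= k < N) (((k == c) && b) : nat)%:R * w k = if b then w c else 0.
Proof.
move=> hc; case: b.
  rewrite (@big_cat_nat _ _ _ c 0 N) //=; last lia.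
  rewrite (@big_cat_nat _ _ _ c.+1 c N) //= big_nat1.
  rewrite eqxx mul1r big1_seq ?add0r; last first.
    move=> k; rewrite mem_index_iota => hk; have -> : (k == c) = false by lia. by rewrite mul0r.
  rewrite big1_seq ?addr0 // => k; rewrite mem_index_iota => hk.
  have -> : (k == c) = false by lia. by rewrite mul0r.
by rewrite big1 // => k _; rewrite andbF mul0r.
Qed.

Lemma sum_eq' (w : nat -> R) (c : nat) (b : bool) : (c < N)%N ->
  \sum_(0 <= k < N) ((b && (k == c)) : nat)%:R * w k = if b then w c else 0.
Proof. by move=> hc; rewrite -(sum_eq w c b hc); apply: eq_bigr => k _; rewrite andbC. Qed.

Lemma sum_rng (w : nat -> R) (b : bool) (lo hi : nat) : (lo <= hi.+1)%N -> (hi < N)%N ->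
  \sum_(0 <= k < N) ((b && (lo <= k <= hi)%N) : nat)%:R * w k
   = if b then \sum_(lo <= k < hi.+1) w k else 0.
Proof.
move=> h1 h2; case: b; last by rewrite big1 // => k _; rewrite mul0r.
rewrite (@big_cat_nat _ _ _ lo 0 N) //=; last lia.
rewrite (@big_cat_nat _ _ _ hi.+1 lo N) //=.
rewrite big1_seq ?add0r; last first.
  move=> k; rewrite mem_index_iota => hk; have -> : (lo <= k <= hi)%N = false by lia. by rewrite mul0r.
rewrite [X in _ + X]big1_seq ?addr0; last first.
  move=> k; rewrite mem_index_iota => hk; have -> : (lo <= k <= hi)%N = false by lia. by rewrite mul0r.
apply: eq_big_seq => k; rewrite mem_index_iota => hk.
have -> : (lo <= k <= hi)%N = true by lia. by rewrite mul1r.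
Qed.

Definition Anb (w : nat -> R) (j : nat) : R :=
  (if (1 <= j <= p)%N then w 0%N else 0) + (if (p.+2 <= j <= p+q+1)%N then w p.+1 else 0)
  + (if j == p.+3 then w p.+2 else 0) + (if j == (p+q+1)%N then w 1%N else 0)
  + (if j == 0%N then \sum_(1 <= k < p.+1) w k else 0)
  + (if j == p.+1 then \sum_(p.+2 <= k < (p+q+1).+1) w k else 0)
  + (if j == p.+2 then w p.+3 else 0) + (if j == 1%N then w (p+q+1)%N else 0).

Lemma sumU (w : nat -> R) (j : nat) :
  \sum_(0 <= k < N) (nat_of_bool (U_edge p q k j || U_edge p q j k))%:R * w k = Anb w j.
Proof.
under eq_bigr => k _ do rewrite ind8 !natrD !mulrDl.
rewrite !big_split /=.
rewrite !sum_eq ?sum_eq' ?sum_rng //; lia.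
Qed.

Lemma mulC_entry (v : 'rV[R]_N) (w : nat -> R) :
  (forall i : 'I_N, v 0 i = w i) -> forall j : 'I_N,
  (v *m Ucompl_mx R p q) 0 j = \sum_(0 <= k < N) w k - w j - Anb w j.
Proof.
move=> hw j; rewrite !mxE.
under eq_bigr => i _ do rewrite /Ucompl_mx /adjmx mxE /compl_rel /U_rel -val_eqE compl_R hw !mulrBr mulr1.
rewrite !sumrB -sumU big_mkord.
congr (_ - _ - _).
  rewrite (bigD1 j) //= eqxx mulr1 big1 ?addr0 // => i hij.
  by rewrite val_eqE (negbTE hij) mulr0.
by rewrite big_mkord; apply: eq_bigr => i _; rewrite mulrC.
Qed.

Section AnbCases.
Variable w : nat -> R.
Lemma Anb_0 : Anb w 0 = \sum_(1 <= k < p.+1) w k.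
Proof. rewrite /Anb; ifs; ring. Qed.
Lemma Anb_1 : Anb w 1 = w 0%N + w (p+q+1)%N.
Proof. rewrite /Anb; ifs; ring. Qed.
Lemma Anb_P j : (2 <= j <= p)%N -> Anb w j = w 0%N.
Proof. move=> hj; rewrite /Anb; ifs; ring. Qed.
Lemma Anb_c : Anb w p.+1 = \sum_(p.+2 <= k < (p+q+1).+1) w k.
Proof. rewrite /Anb; ifs; ring. Qed.
Lemma Anb_d : Anb w p.+2 = w p.+1 + w p.+3.
Proof. rewrite /Anb; ifs; ring. Qed.
Lemma Anb_e : Anb w p.+3 = w p.+1 + w p.+2.
Proof. rewrite /Anb; ifs; ring. Qed.
Lemma Anb_Q j : (p.+4 <= j <= p + q)%N -> Anb w j = w p.+1.
Proof. move=> hj; rewrite /Anb; ifs; ring. Qed.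
Lemma Anb_f : Anb w (p+q+1)%N = w p.+1 + w 1%N.
Proof. rewrite /Anb; ifs; ring. Qed.

Lemma sumN : \sum_(0 <= k < N) w k = w 0%N + w 1%N + \sum_(2 <= k < p.+1) w k + w p.+1
   + w p.+2 + w p.+3 + \sum_(p.+4 <= k < p+q+1) w k + w (p+q+1)%N.
Proof.
have -> : N = (p+q+1).+1 by lia.
rewrite big_nat_recr /=; last by lia.
rewrite big_ltn; last by lia.
rewrite big_ltn; last by lia.
rewrite (@big_cat_nat _ _ _ p.+1 2 (p+q+1)) //=; last by lia.
rewrite (big_ltn (m := p.+1)); last by lia.
rewrite (big_ltn (m := p.+2)); last by lia.
rewrite (big_ltn (m := p.+3)); last by lia.
ring.
Qed.

Lemma sum1p : \sum_(1 <= k < p.+1) w k = w 1%N + \sum_(2 <= k < p.+1) w k.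
Proof. by rewrite big_ltn. Qed.

Lemma sumc : \sum_(p.+2 <= k < (p+q+1).+1) w k
   = w p.+2 + w p.+3 + \sum_(p.+4 <= k < p+q+1) w k + w (p+q+1)%N.
Proof.
rewrite big_nat_recr /=; last by lia.
rewrite big_ltn; last by lia.
rewrite big_ltn; last by lia.
ring.
Qed.
End AnbCases.

Lemma sumconst (w : nat -> R) (lo hi : nat) (y : R) :
  (forall k, (lo <= k < hi)%N -> w k = y) -> \sum_(lo <= k < hi) w k = (hi - lo)%:R * y.
Proof. by move=> h; rewrite (eq_big_nat _ _ h) sumr_const_nat mulr_natl. Qed.

Lemma classes (j : nat) : (j < N)%N ->
  j = 0%N \/ j = 1%N \/ (2 <= j <= p)%N \/ j = p.+1 \/ j = p.+2 \/ j = p.+3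
  \/ (p.+4 <= j <= p + q)%N \/ j = (p+q+1)%N.
Proof. lia. Qed.

Lemma natP1 : ((p.+1 - 2)%N%:R : R) = p%:R - 1.
Proof. by rewrite (_ : (p.+1 - 2 = p - 1)%N) ?natrB //; lia. Qed.
Lemma natQ3 : (((p+q+1) - p.+4)%N%:R : R) = q%:R - 3.
Proof. by rewrite (_ : ((p+q+1) - p.+4 = q - 3)%N) ?natrB //; lia. Qed.

Lemma eig1 (e : R) : eigenvalue (Ucompl_mx R p q) e -> e < -4 ->
  gf p%:R q%:R (e + 1) = 0.
Proof.
case/eigenvalueP => v hv vnz he.
have N0 : (0 < N)%N by lia.
pose i0 : 'I_N := Ordinal N0.
pose w := fun k => v 0 (insubd i0 k).
have hw : forall i : 'I_N, v 0 i = w i by move=> i; rewrite /w valKd.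
have E : forall j, (j < N)%N -> e * w j = \sum_(0 <= k < N) w k - w j - Anb w j.
  move=> j hj; have H := mulC_entry _ _ hw (Ordinal hj).
  by rewrite hv mxE hw /= in H; exact: H.
set S := \sum_(0 <= k < N) w k in E.
clear hv; move: vnz.
have t0 : e + 1 != 0 by apply/negP => /eqP h; lra.
pose y := (S - w 0%N) / (e + 1).
pose z := (S - w p.+1) / (e + 1).
have hy : forall k, (2 <= k <= p)%N -> w k = y.
  move=> k hk; have := E k; rewrite (Anb_P _ _ hk).
  move=> /(_ ltac:(lia)) h.
  have h' : (e + 1) * w k = S - w 0%N by lra.
  by rewrite /y -h' mulrC mulKf.
have hz : forall k, (p.+4 <= k <= p + q)%N -> w k = z.
  move=> k hk; have := E k; rewrite (Anb_Q _ _ hk).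
  move=> /(_ ltac:(lia)) h.
  have h' : (e + 1) * w k = S - w p.+1 by lra.
  by rewrite /z -h' mulrC mulKf.
have sP : \sum_(2 <= k < p.+1) w k = (p%:R - 1) * y.
  by rewrite (@sumconst w 2 p.+1 y) ?natP1 // => k hk; apply: hy; lia.
have sQ : \sum_(p.+4 <= k < p+q+1) w k = (q%:R - 3) * z.
  by rewrite (@sumconst w p.+4 (p+q+1) z) ?natQ3 // => k hk; apply: hz; lia.
have ty : (e + 1) * y = S - w 0%N by rewrite /y mulrC divfK.
have tz : (e + 1) * z = S - w p.+1 by rewrite /z mulrC divfK.
have ea := E 0%N ltac:(lia); rewrite Anb_0 sum1p sP in ea.
have eb := E 1%N ltac:(lia); rewrite Anb_1 in eb.
have ec := E p.+1 ltac:(lia); rewrite Anb_c sumc sQ in ec.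
have ed := E p.+2 ltac:(lia); rewrite Anb_d in ed.
have ee := E p.+3 ltac:(lia); rewrite Anb_e in ee.
have ef := E (p+q+1)%N ltac:(lia); rewrite Anb_f in ef.
have eS : S = w 0%N + w 1%N + (p%:R - 1) * y + w p.+1 + w p.+2 + w p.+3 + (q%:R - 3) * z
   + w (p+q+1)%N by rewrite /S sumN sP sQ.
have [//|hg] := eqVneq (gf p%:R q%:R (e + 1)) 0.
move=> vnz.
have hP : (1 : R) <= p%:R by rewrite ler1n.
have [a0 [b0 [c0 [d0 [e0 [f0 [y0 z0]]]]]]] :=
  @alg_dir1 R (e + 1) p%:R q%:R S y (w 0%N) (w 1%N) (w p.+1) (w p.+2) (w p.+3)
     (w (p+q+1)%N) z ltac:(lra) hP ty ltac:(lra) ltac:(lra) ltac:(lra) ltac:(lra)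
     ltac:(lra) tz ltac:(lra) ltac:(lra) hg.
case/negP: vnz; apply/eqP/rowP => i; rewrite mxE hw.
have := classes _ (ltn_ord i).
move=> [->|[->|[h|[->|[->|[->|[h|->]]]]]]] //; by [rewrite hy | rewrite hz].
Qed.

Lemma eig2 (t : R) : t < -3 -> gf p%:R q%:R t = 0 ->
  eigenvalue (Ucompl_mx R p q) (t - 1).
Proof.
move=> ht hg.
have hP : (1 : R) <= p%:R by rewrite ler1n.
have [S [y [K1 [K2 hnz]]]] := @alg_dir2 R t p%:R q%:R ht hP hg.
have t0 : t != 0 by apply/negP => /eqP h; lra.
have t1 : t + 1 != 0 by apply/negP => /eqP h; lra.
have tt1 : t * (t + 1) != 0 by rewrite mulf_neq0.
pose a := aE t S y. pose b := bE t p%:R S y. pose f := fE t p%:R S y.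
pose c := cE t p%:R S y.
pose wd := (S - c) / (t + 1). pose z := (S - c) / t.
pose w := fun k : nat => if k == 0%N then a else if k == 1%N then b
  else if (k <= p)%N then y else if k == p.+1 then c else if (k <= p.+3)%N then wd
  else if (k <= p + q)%N then z else f.
have w0 : w 0%N = a by [].
have w1 : w 1%N = b by [].
have wc : w p.+1 = c by rewrite /w; ifs.
have wd2 : w p.+2 = wd by rewrite /w; ifs.
have wd3 : w p.+3 = wd by rewrite /w; ifs.
have wf : w (p+q+1)%N = f by rewrite /w; ifs.
have wy : forall k, (2 <= k <= p)%N -> w k = y by move=> k hk; rewrite /w; ifs.
have wz : forall k, (p.+4 <= k <= p + q)%N -> w k = z by move=> k hk; rewrite /w; ifs.
have sP : \sum_(2 <= k < p.+1) w k = (p%:R - 1) * y.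
  by rewrite (@sumconst w 2 p.+1 y) ?natP1 // => k hk; apply: wy; lia.
have sQ : \sum_(p.+4 <= k < p+q+1) w k = (q%:R - 3) * z.
  by rewrite (@sumconst w p.+4 (p+q+1) z) ?natQ3 // => k hk; apply: wz; lia.
have hS' : a + b + (p%:R - 1) * y + c + wd + wd + (q%:R - 3) * z + f = S.
  have H : t * (t + 1) * (a + b + (p%:R - 1) * y + c + wd + wd + (q%:R - 3) * z + f - S)
    = K2f t p%:R q%:R S y by rewrite /K2f /wd /z /a /b /c /f; field; rewrite ?t0 ?t1.
  move: H; rewrite K2 => /eqP; rewrite mulf_eq0 (negbTE tt1) /= subr_eq0 => /eqP //.
have hc' : (t - 1) * c = S - c - (wd + wd + (q%:R - 3) * z + f).
  have H : t * (t + 1) * ((S - c - (wd + wd + (q%:R - 3) * z + f)) - (t - 1) * c)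
    = - K1f t p%:R q%:R S y by rewrite /K1f /wd /z /a /b /c /f; field; rewrite ?t0 ?t1.
  move: H; rewrite K1 oppr0 => /eqP; rewrite mulf_eq0 (negbTE tt1) /= subr_eq0 => /eqP //.
have sumS : \sum_(0 <= k < N) w k = S.
  by rewrite sumN w0 w1 sP wc wd2 wd3 sQ wf.
apply/eigenvalueP; exists (\row_j w j); last first.
  apply/negP => /eqP h0.
  have N0 : (0 < N)%N by lia.
  have N1 : (1 < N)%N by lia.
  have ea : w 0%N = 0.
    by move: (congr1 (fun M : 'rV_N => M 0 (Ordinal N0)) h0); rewrite !mxE.
  have eb : w 1%N = 0.
    by move: (congr1 (fun M : 'rV_N => M 0 (Ordinal N1)) h0); rewrite !mxE.
  by move: hnz; rewrite -/a -/b -w0 -w1 ea eb eqxx; case.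
apply/rowP => j.
rewrite (mulC_entry _ w) => [|i]; last by rewrite mxE.
rewrite !mxE sumS.
have := classes _ (ltn_ord j).
move=> [->|[->|[h|[->|[->|[->|[h|->]]]]]]].
- rewrite Anb_0 sum1p sP w0 w1 /a /b /bE /aE; ring.
- rewrite Anb_1 w0 w1 wf /a /b /f /fE /bE /aE; ring.
- rewrite (Anb_P _ _ h) (wy _ h) w0 /a /aE; ring.
- rewrite Anb_c sumc wd2 wd3 sQ wf wc hc'; ring.
- by rewrite Anb_d wc wd2 wd3 /wd; field; rewrite ?t0 ?t1.
- by rewrite Anb_e wc wd2 wd3 /wd; field; rewrite ?t0 ?t1.
- by rewrite (Anb_Q _ _ h) (wz _ h) wc /z; field; rewrite ?t0 ?t1.
- rewrite Anb_f wf wc w1 /f /c /b /a /cE /fE; ring.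
Qed.
End Comb.

Lemma gersh (R : rcfType) (p q : nat) (e : R) :
  eigenvalue (Ucompl_mx R p q) e -> - ((p + q + 2)%N%:R) <= e.
Proof.
case/eigenvalueP => v hv vnz.
have [i0 hi0] : exists i, v 0 i != 0.
  case: (pickP (fun i => v 0 i != 0)) => [i hi|h]; first by exists i.
  case/negP: vnz; apply/eqP/rowP => i; rewrite mxE.
  by have := h i; move/negbFE/eqP.
case: (@arg_maxP _ _ _ i0 predT (fun i => `|v 0 i|) isT) => j _ hj.
have E : e * v 0 j = \sum_i v 0 i * Ucompl_mx R p q i j.
  by have := congr1 (fun M : 'rV_(p + q + 2) => M 0 j) hv; rewrite /= !mxE => <-.
have vj : 0 < `|v 0 j|.
  apply: (lt_le_trans _ (hj i0 isT)); by rewrite normr_gt0.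
have h1 : `|e| * `|v 0 j| <= (p + q + 2)%N%:R * `|v 0 j|.
  rewrite -normrM E; apply: le_trans (ler_norm_sum _ _ _) _.
  have -> : (p + q + 2)%N%:R * `|v 0 j| = \sum_(i < p + q + 2) `|v 0 j|.
    by rewrite sumr_const card_ord mulr_natl.
  apply: ler_sum => i _; rewrite normrM.
  have hC : `|Ucompl_mx R p q i j| <= 1.
    by rewrite /Ucompl_mx /adjmx mxE; case: (compl_rel _ i j); rewrite ?normr0 ?normr1.
  apply: le_trans (ler_wpM2l (normr_ge0 _) hC) _; rewrite mulr1.
  exact: hj.
have : `|e| <= (p + q + 2)%N%:R by rewrite -(ler_pM2r vj).
by rewrite ler_norml => /andP [].
Qed.


Definition gfr (T : comNzRingType) (P Q t : T) : T :=
  - t^+7 + t^+6 - t^+5 + 5 * t^+4 + 4 * t^+3 - 6 * t^+2 - t - 9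
  + (t + 1) * ((t^+5 - t^+4 - 2 * t^+3 + 5 * t^+2 - 11 * t + 9) * P
              + (t^+5 - t^+4 - 2 * t^+3 + t^+2 - t + 3) * Q)
  + (t + 1)^+2 * (-2 * t^+2 + 5 * t - 3) * P * Q.
Arguments gfr {T}.
Lemma gfr_morph (T T' : comNzRingType) (f : {rmorphism T -> T'}) (P Q t : T) :
  f (gfr P Q t) = gfr (f P) (f Q) (f t).
Proof. by rewrite /gfr !(rmorphD, rmorphB, rmorphN, rmorphM, rmorphXn, rmorph_nat, rmorph1). Qed.
Lemma gpolyE (R : rcfType) (P Q x : R) : (gfr (P%:P) (Q%:P) 'X).[x] = gf P Q x.
Proof.
have H := @gfr_morph _ _ (horner_eval x) P%:P Q%:P 'X.
change ((gfr P%:P Q%:P 'X).[x] = gfr P%:P.[x] Q%:P.[x] 'X.[x]) in H.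
rewrite !hornerC hornerX in H; exact: H.
Qed.

Lemma key (R : rcfType) (m p q p0 q0 : nat) : (1 <= p)%N -> (3 <= q)%N -> (9 <= q0)%N ->
  (p0 = q0 \/ p0 = q0.+1) -> (p + q = m)%N -> (p0 + q0 = m)%N -> p != p0 ->
  forall e : R, eigenvalue (Ucompl_mx R p q) e ->
  exists e0, eigenvalue (Ucompl_mx R p0 q0) e0 /\ e0 < e.
Proof.
move=> hp hq hq0 hpar hm hm0 hne e ev.
have hp0 : (1 <= p0)%N by lia.
have hq0' : (3 <= q0)%N by lia.
have hsum : (p%:R + q%:R : R) = p0%:R + q0%:R by rewrite -!natrD hm hm0.
have hparR : (q0%:R : R) = p0%:R \/ (q0%:R : R) = p0%:R - 1.
  case: hpar => ->; [by left | right; rewrite -addn1 natrD; ring].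
have hd : (p0%:R + 1 <= (p%:R : R)) \/ (p%:R : R) <= p0%:R - 1.
  case: (ltngtP p p0) => h.
  - right; have h' : (p + 1 <= p0)%N by lia.
    by move: h'; rewrite -(ler_nat R) natrD => h2; lra.
  - left; have h' : (p0 + 1 <= p)%N by lia.
    by move: h'; rewrite -(ler_nat R) natrD => h2; lra.
  - by rewrite h eqxx in hne.
have hP0 : (9 : R) <= p0%:R.
  have h : (9 <= p0)%N by lia.
  by rewrite -(ler_nat R) in h.
have hQ0 : (9 : R) <= q0%:R.
  have h : (9 <= q0)%N by lia.
  by rewrite -(ler_nat R) in h.
have G := @gersh R p q e ev.
have hN : ((p + q + 2)%N%:R : R) = m%:R + 2 by rewrite -hm natrD.
rewrite hN in G.
have hmR : (m%:R : R) = p0%:R + q0%:R by rewrite -hm0 natrD.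
have hp0R : (0 : R) <= p0%:R by apply: ler0n.
have hq0R : (0 : R) <= q0%:R by apply: ler0n.
have hgL := @gbig R p0%:R q0%:R (m%:R + 2) ltac:(lra) hp0R hq0R ltac:(lra).
have [ts [gneg [tsle [tse Lts]]]] : exists ts, gf p0%:R q0%:R ts < 0 /\ ts <= -3 /\
    ts - 1 <= e /\ - (m%:R + 2) <= ts.
  case: (ltP e (-4)) => he.
  - exists (e + 1).
    have g0 := @eig1 R p q hp hq e ev he.
    have := @gcmp R p%:R q%:R p0%:R q0%:R (e + 1) ltac:(lra) hsum hparR hd.
    rewrite g0 => hlt; split => //; split; [lra | split; lra].
  - exists (-3); split; first exact: (@gm3 R).
    split; [lra | split; lra].
have [x hx rx] := @poly_ivt R (- gfr (p0%:R)%:P (q0%:R)%:P 'X) (- (m%:R + 2)) ts Lts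
  ltac:(rewrite !hornerN !gpolyE; apply/andP; split; lra).
move: rx; rewrite /root hornerN gpolyE oppr_eq0 => /eqP gx.
have xts : x < ts.
  move: hx => /andP [_ h].
  have hne' : x != ts by apply/eqP => hxe; move: gneg; rewrite -hxe gx ltxx.
  by rewrite lt_neqAle hne' h.
exists (x - 1); split; last by lra.
apply: (@eig2 R p0 q0 hp0 hq0' x) => //; lra.
Qed.

Theorem lemma2p2 (R : rcfType) (n p q : nat) (l1 l2 : R) :
  (20 <= n)%N -> (1 <= p)%N -> (3 <= q)%N -> (p + q = n - 2)%N ->
  is_lambda_min (Ucompl_mx R p q) l1 ->
  is_lambda_min (Ucompl_mx R (uphalf (n - 2)) (n - 2)./2) l2 ->
  l2 <= l1 /\ (l1 = l2 <-> (p = uphalf (n - 2) /\ q = (n - 2)./2)).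
Proof.
move=> hn hp hq hpq [ev1 min1] [ev2 min2].
have e1 := odd_double_half (n - 2).
have e2 := uphalf_half (n - 2).
rewrite -muln2 in e1.
have hq0 : (9 <= (n - 2)./2)%N by lia.
have hpar : uphalf (n - 2) = (n - 2)./2 \/ uphalf (n - 2) = ((n - 2)./2).+1 by lia.
have hm0 : (uphalf (n - 2) + (n - 2)./2 = n - 2)%N by lia.
case: (eqVneq p (uphalf (n - 2))) => [Ep|Ne].
- have Eq : q = (n - 2)./2 by lia.
  rewrite Ep Eq in ev1 min1 *.
  have h1 := min2 l1 ev1.
  have h2 := min1 l2 ev2.
  split => //; split => // _.
  by apply/eqP; rewrite eq_le h1 h2.
- have [e0 [ev0 lt0]] := @key R _ p q _ _ hp hq hq0 hpar hpq hm0 Ne l1 ev1.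
  have h1 := min2 e0 ev0.
  have hlt : l2 < l1 by apply: le_lt_trans h1 lt0.
  split; first exact: ltW.
  split.
  + by move=> E; rewrite E ltxx in hlt.
  + by case => E _; rewrite E eqxx in Ne.
Qed.
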